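(* Let $L$ be a finite $\vee$-semilattice with a least element $0$, and let $v:L\to\mathbb{R}$ be a strictly isotone upper valuation or a strictly isotone lower valuation. Let $d_v(x,y)=v(x)+v(y)-2v^-(x,y)$ if $v$ is a lower valuation and $d_v(x,y)=2v^+(x,y)-v(x)-v(y)$ if $v$ is an upper valuation. If $d_v(x,y)=v^+(x,y)-v^-(x,y)$ for all $x,y\in L$, then $L$ is a modular lattice.
   Context: For a poset $(P,\le)$ and $x\in P$: $\downarrow x=\{x'\in P: x'\le x\}$, $\uparrow x=\{x'\in P: x\le x'\}$. A function $f:P\to\mathbb{R}$ is isotone if $x\le y\Rightarrow f(x)\le f(y)$, strictly isotone if $x<y\Rightarrow f(x)<f(y)$. For an isotone $f$ and $x,y\in P$ define $f^-(x,y)=\sup\{f(z):z\in\downarrow x\cap\downarrow y\}$ and $f^+(x,y)=\inf\{f(z):z\in\uparrow x\cap\uparrow y\}$, with $\inf\emptyset=+\infty$, $\sup\emptyset=-\infty$. An isotone $v$ is a lower valuation if $\downarrow x\cap\downarrow y\neq\emptyset$ for all $x,y$ and $v(x)+v(y)\le v^-(x,y)+v^+(x,y)$ for all $x,y$; it is an upper valuation if $\uparrow x\cap\uparrow y\neq\emptyset$ for all $x,y$ and $v^-(x,y)+v^+(x,y)\le v(x)+v(y)$ for all $x,y$. *)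

(* Defs.v *)
From HB Require Import structures.
From mathcomp Require Import all_boot all_order all_algebra.
Set Implicit Arguments. Unset Strict Implicit. Unset Printing Implicit Defensive.
Import Order.TTheory GRing.Theory Num.Theory.
Local Open Scope order_scope.

Section Defs.
Variables (disp : Order.disp_t) (L : finPOrderType disp) (R : realFieldType).

Definition is_lub (j x y : L) : Prop :=
  x <= j /\ y <= j /\ forall u : L, x <= u -> y <= u -> j <= u.
Definition is_glb (m x y : L) : Prop :=
  m <= x /\ m <= y /\ forall u : L, u <= x -> u <= y -> u <= m.

Definition isotone (f : L -> R) : Prop := forall x y : L, x <= y -> (f x <= f y)%R.
Definition strictly_isotone (f : L -> R) : Prop :=
  forall x y : L, x < y -> (f x < f y)%R.

(* maximum of a list of reals; None encodes sup of the empty set = -oo *)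
Definition omax (s : seq R) : option R :=
  if s is a :: s' then Some (foldr Num.max a s') else None.
(* minimum of a list of reals; None encodes inf of the empty set = +oo *)
Definition omin (s : seq R) : option R :=
  if s is a :: s' then Some (foldr Num.min a s') else None.

Definition fminus (f : L -> R) (x y : L) : option R :=
  omax [seq f z | z <- enum L & (z <= x) && (z <= y)].
Definition fplus (f : L -> R) (x y : L) : option R :=
  omin [seq f z | z <- enum L & (x <= z) && (y <= z)].

(* lower valuation: down-sets pairwise intersect and
   v x + v y <= v^-(x,y) + v^+(x,y)  (trivially true when v^+ = +oo) *)
Definition lower_valuation (v : L -> R) : Prop :=
  isotone v /\
  (forall x y : L, exists z : L, z <= x /\ z <= y) /\
  (forall (x y : L) (m : R), fminus v x y = Some m ->
     forall p : R, fplus v x y = Some p -> (v x + v y <= m + p)%R).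

(* upper valuation: up-sets pairwise intersect and
   v^-(x,y) + v^+(x,y) <= v x + v y  (trivially true when v^- = -oo) *)
Definition upper_valuation (v : L -> R) : Prop :=
  isotone v /\
  (forall x y : L, exists z : L, x <= z /\ y <= z) /\
  (forall (x y : L) (p : R), fplus v x y = Some p ->
     forall m : R, fminus v x y = Some m -> (m + p <= v x + v y)%R).

(* L is a modular lattice: all binary meets and joins exist, and for x <= z,
   x ∨ (y ∧ z) = (x ∨ y) ∧ z. *)
Definition modular_lattice : Prop :=
  (forall x y : L, exists j, is_lub j x y) /\
  (forall x y : L, exists m, is_glb m x y) /\
  (forall x y z m a j b : L, x <= z ->
     is_glb m y z -> is_lub a x m -> is_lub j x y -> is_glb b j z -> a = b).

End Defs.

(* Main.v *)
Require Import Defs.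
From HB Require Import structures.
From mathcomp Require Import all_boot all_order all_algebra.
Import Order.TTheory GRing.Theory Num.Theory.
Local Open Scope ring_scope.
Lemma omax_eq (R : realFieldType) (s : seq R) a :
  a \in s -> (forall e, e \in s -> e <= a) -> omax s = Some a.
Proof.
case: s => [//|h t] Ha Hle /=; congr Some.
have : (foldr Num.max h t \in h :: t) /\ forall e, e \in h :: t -> e <= foldr Num.max h t.
  elim: t {Ha Hle} => [|c t [IH1 IH2]] /=.
    by split; [rewrite inE|move=> e; rewrite inE => /eqP->].
  split.
    case: (leP c (foldr Num.max h t)) => H.
      move: IH1; rewrite !inE => /orP[->//|->]; by rewrite !orbT.
    by rewrite !inE eqxx orbT.
  move=> e; rewrite !inE => /orP[/eqP->|/orP[/eqP->|He]].
  - by rewrite le_max; apply/orP; right; apply: IH2; rewrite inE eqxx.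
  - by rewrite le_max lexx.
  - by rewrite le_max; apply/orP; right; apply: IH2; rewrite inE He orbT.
move=> [H1 H2]; apply/eqP; rewrite eq_le Hle // H2 //.
Qed.
Lemma omin_eq (R : realFieldType) (s : seq R) a :
  a \in s -> (forall e, e \in s -> a <= e) -> omin s = Some a.
Proof.
case: s => [//|h t] Ha Hle /=; congr Some.
have : (foldr Num.min h t \in h :: t) /\ forall e, e \in h :: t -> foldr Num.min h t <= e.
  elim: t {Ha Hle} => [|c t [IH1 IH2]] /=.
    by split; [rewrite inE|move=> e; rewrite inE => /eqP->].
  split.
    case: (leP c (foldr Num.min h t)) => H.
      by rewrite !inE eqxx orbT.
    move: IH1; rewrite !inE => /orP[->//|->]; by rewrite !orbT.
  move=> e; rewrite !inE => /orP[/eqP->|/orP[/eqP->|He]].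
  - by rewrite ge_min; apply/orP; right; apply: IH2; rewrite inE eqxx.
  - by rewrite ge_min lexx.
  - by rewrite ge_min; apply/orP; right; apply: IH2; rewrite inE He orbT.
move=> [H1 H2]; apply/eqP; rewrite eq_le Hle // H2 //.
Qed.
Lemma alg1 (R : realFieldType) (a b m p : R) : a + b - 2%:R * m = p - m -> a + b = m + p.
Proof.
move=> H. have -> : a + b = (a + b - 2%:R * m) + 2%:R * m by rewrite subrK.
by rewrite H mulr_natl mulr2n addrA subrK addrC.
Qed.
Lemma alg2 (R : realFieldType) (a b m p : R) : 2%:R * p - a - b = p - m -> a + b = m + p.
Proof.
move=> H. have E : 2%:R * p - a - b = 2%:R * p - (a + b) by rewrite opprD addrA.
rewrite E in H. have -> : a + b = 2%:R * p - (2%:R * p - (a + b)) by symmetry; rewrite opprB addrC subrK.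
by rewrite H opprB mulr_natl mulr2n addrCA addrK.
Qed.
Section Main.
Local Open Scope order_scope.
Variables (disp : Order.disp_t) (L : finPOrderType disp) (R : realFieldType) (v : L -> R).
Hypothesis Hstrict : strictly_isotone v.
Hypothesis Hjoin : forall x y : L, exists j : L, is_lub j x y.

Lemma iso_v : isotone v.
Proof. move=> x y; rewrite le_eqVlt => /orP[/eqP->|/Hstrict/ltW//]; exact: lexx. Qed.

Lemma ex_maxv (s : seq L) a : a \in s ->
  exists2 m, m \in s & forall z, z \in s -> (v z <= v m)%R.
Proof.
elim: s a => [//|h t IH] a _.
case Ht: (t == [::]).
  move/eqP: Ht => ->; exists h; first by rewrite inE.
  by move=> z; rewrite inE => /eqP->.
have [c Hc] : exists c, c \in t by case: t {IH} Ht => [//|c t _]; exists c; rewrite inE eqxx.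
have [m Hm Hmax] := IH c Hc.
case: (leP (v h) (v m)) => H.
  exists m; first by rewrite inE Hm orbT.
  by move=> z; rewrite inE => /orP[/eqP->//|/Hmax].
exists h; first by rewrite inE eqxx.
move=> z; rewrite inE => /orP[/eqP->//|/Hmax Hz]; exact: (le_trans Hz (ltW H)).
Qed.

Lemma glb_ex (Hbot : exists z0 : L, forall x : L, z0 <= x) (x y : L) : exists m : L, is_glb m x y.
Proof.
case: Hbot => z0 Hz0.
set s := [seq z <- enum L | (z <= x) && (z <= y)].
have Hin : forall z, (z \in s) = (z <= x) && (z <= y) by move=> z; rewrite mem_filter mem_enum andbT.
have Hz0s : z0 \in s by rewrite Hin !Hz0.
have [m Hm Hmax] := ex_maxv s z0 Hz0s.
move: Hm; rewrite Hin => /andP[mx my].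
exists m; split=> //; split=> // u ux uy.
have [w [uw [mw Hw]]] := Hjoin u m.
have wx : w <= x by apply: Hw.
have wy : w <= y by apply: Hw.
have := Hmax w; rewrite Hin wx wy => /(_ isT) Hvw.
move: mw; rewrite le_eqVlt => /orP[/eqP Emw|Hlt].
  by rewrite Emw.
by have := Hstrict _ _ Hlt; rewrite ltNge Hvw.
Qed.

Lemma fminus_glb m x y : is_glb m x y -> fminus v x y = Some (v m).
Proof.
move=> [mx [my Hm]]; apply: omax_eq.
  by apply: map_f; rewrite mem_filter mx my mem_enum.
move=> e /mapP[z]; rewrite mem_filter mem_enum andbT => /andP[zx zy] ->.
by apply: iso_v; apply: Hm.
Qed.

Lemma fplus_lub j x y : is_lub j x y -> fplus v x y = Some (v j).
Proof.
move=> [xj [yj Hj]]; apply: omin_eq.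
  by apply: map_f; rewrite mem_filter xj yj mem_enum.
move=> e /mapP[z]; rewrite mem_filter mem_enum andbT => /andP[xz yz] ->.
by apply: iso_v; apply: Hj.
Qed.

End Main.
Local Open Scope order_scope.

Theorem mainTheorem3 (disp : Order.disp_t) (L : finPOrderType disp)
    (R : realFieldType) (v : L -> R)
    (Hbot : exists z0 : L, forall x : L, z0 <= x)
    (Hjoin : forall x y : L, exists j : L, is_lub j x y)
    (Hstrict : strictly_isotone v)
    (Hd : (lower_valuation v /\
             forall (x y : L) (m p : R), fminus v x y = Some m ->
               fplus v x y = Some p ->
               (v x + v y - 2%:R * m = p - m)%R)
          \/
          (upper_valuation v /\
             forall (x y : L) (m p : R), fminus v x y = Some m ->
               fplus v x y = Some p ->
               (2%:R * p - v x - v y = p - m)%R)) :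
  modular_lattice L.
Proof.
have Hval : forall x y m j, is_glb m x y -> is_lub j x y -> (v x + v y = v m + v j)%R.
  move=> x y m j Hm Hj.
  have E1 := @fminus_glb _ _ _ v Hstrict _ _ _ Hm; have E2 := @fplus_lub _ _ _ v Hstrict _ _ _ Hj.
  case: Hd => [[_ H]|[_ H]].
    exact: alg1 (H _ _ _ _ E1 E2).
  exact: alg2 (H _ _ _ _ E1 E2).
split=> //; split; first exact: (@glb_ex _ _ _ v Hstrict Hjoin Hbot).
move=> x y z m a j b xz Hm Ha Hj Hb.
have [my [mz Hm']] := Hm; have [xa [ma Ha']] := Ha.
have [xj [yj Hj']] := Hj; have [bj [bz Hb']] := Hb.
have [g Hg] := @glb_ex _ _ _ v Hstrict Hjoin Hbot x m.
have [k Hk] := Hjoin j z.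
have Hg2 : is_glb g x y.
  have [gx [gm Hg']] := Hg.
  split=> //; split; first exact: (Order.POrderTheory.le_trans gm my).
  move=> u ux uy; apply: Hg' => //; apply: Hm' => //; exact: (le_trans ux xz).
have Hk2 : is_lub k y z.
  have [jk [zk Hk']] := Hk.
  split; first exact: (le_trans yj jk).
  split=> // u yu zu; apply: Hk' => //; apply: Hj' => //; exact: (le_trans xz zu).
have V1 := Hval _ _ _ _ Hg Ha.
have V2 := Hval _ _ _ _ Hg2 Hj.
have V3 := Hval _ _ _ _ Hm Hk2.
have V4 := Hval _ _ _ _ Hb Hk.
have ab : a <= b.
  apply: Hb'.
    apply: Ha' => //; exact: (le_trans my yj).
  exact: Ha'.
have Eab : v a = v b.
  apply: (@addIr _ (v g + v k)).
  transitivity (v x + (v y + v z))%R.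
    by rewrite addrA [(v a + v g)%R]addrC -V1 -addrA V3.
  by rewrite [(v b + _)%R]addrCA -V4 [(v g + (_ + _))%R]addrA -V2 addrA.
move: ab; rewrite le_eqVlt => /orP[/eqP//|/Hstrict].
by rewrite Eab ltxx.
Qed.
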